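(* For every $\alpha<\omega_1$: (1) $\langle A_\alpha,\tau_\alpha\rangle$ is a Baire space; (2) if $\alpha>0$ then $\tau_\alpha$ has no isolated points; (3) every subset of $A_\alpha$ that is Borel in the standard topology of $\mathbf{Tr}$ is Borel with respect to $\tau_\alpha$.
   Context: $\mathbf{Tr}$ is the set of all subtrees of $\omega^{<\omega}$ (subsets closed under initial segments), a closed subspace of $2^{(\omega^{<\omega})}$ with the product topology. $\mathbf{Trw}\subseteq\mathbf{Tr}$ is the set of well-founded trees (no infinite branch). For $T\in\mathbf{Trw}$, $h_T:T\to\omega_1$ is the canonical rank function: $h_T(\nu)=\sup\{h_T(\nu')+1:\nu'\in T \text{ an immediate successor of }\nu\}$ (so terminal nodes get rank 0). For $\alpha<\omega_1$, $A_\alpha=\{T\in\mathbf{Trw}: h_T(\langle\rangle)=\alpha\}$. For $n\in\omega$ let $n^{\le n}$ be the set of sequences of length $\le n$ with values $<n$. $\tau_\alpha$ is the topology on $A_\alpha$ with basis the sets $U(n,T)=\{T'\in A_\alpha: T'\cap n^{\le n}=T\cap n^{\le n} \text{ and } h_{T'}\restriction (T\cap n^{\le n})=h_T\restriction(T\cap n^{\le n})\}$ for $T\in A_\alpha$, $n\in\omega$. *)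

(* Defs.v *)
From HB Require Import structures.
From mathcomp Require Import all_boot all_order.
From mathcomp Require Import all_classical.
From mathcomp Require Import all_reals all_analysis.
Set Implicit Arguments. Unset Strict Implicit. Unset Printing Implicit Defensive.
Local Open Scope classical_set_scope.

(* Countable ordinals: Brouwer ordinals (zero, successor, sup of an   *)
(* omega-sequence) with their standard (Kraus et al.) order.  Up to   *)
(* the induced equivalence these are exactly the ordinals < omega_1.  *)
Inductive Ord : Type :=
| OZ : Ord
| OS : Ord -> Ord
| OL : (nat -> Ord) -> Ord.

Inductive ole : Ord -> Ord -> Prop :=
| ole_zero x : ole OZ x
| ole_trans x y z : ole x y -> ole y z -> ole x z
| ole_succ_mono x y : ole x y -> ole (OS x) (OS y)
| ole_cocone x f k : ole x (f k) -> ole x (OL f)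
| ole_limiting f x : (forall k, ole (f k) x) -> ole (OL f) x.

Definition olt (x y : Ord) := ole (OS x) y.
Definition oeq (x y : Ord) := ole x y /\ ole y x.

(* Trees.  omega^{<omega} = seq nat; 2^(omega^{<omega}) = seq nat -> bool *)
(* with the product topology (bool discrete).                          *)
Definition Tt : Type := {ptws seq nat -> bool}.

Definition Tr : set Tt :=
  [set t | forall s s' : seq nat, prefix s' s -> t s -> t s'].

Definition branch_pref (f : nat -> nat) (n : nat) : seq nat := mkseq f n.

Definition Trw : set Tt :=
  [set t | Tr t /\ ~ exists f : nat -> nat, forall n, t (branch_pref f n)].

(* The canonical rank function, as its graph:
   hrank t s a  means  s \in t and h_t(s) = a, where
   h_t(s) = sup { h_t(s') + 1 : s' immediate successor of s in t }
   (terminal nodes get sup of the zero sequence, i.e. 0). *)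
Inductive hrank (t : Tt) : seq nat -> Ord -> Prop :=
| hrank_intro (s : seq nat) (g : nat -> Ord) :
    t s ->
    (forall n, t (rcons s n) -> hrank t (rcons s n) (g n)) ->
    hrank t s (OL (fun n => if t (rcons s n) then OS (g n) else OZ)).

Definition hval (t : Tt) (s : seq nat) (a : Ord) : Prop :=
  exists b, hrank t s b /\ oeq b a.

Definition hsame (t t' : Tt) (s : seq nat) : Prop :=
  exists a b, hrank t s a /\ hrank t' s b /\ oeq a b.

Definition Aal (al : Ord) : set Tt :=
  [set t | Trw t /\ hval t [::] al].

Definition small (n : nat) (s : seq nat) : bool :=
  (size s <= n) && all (fun x => x < n) s.

Definition Ubas (al : Ord) (n : nat) (t : Tt) : set Tt :=
  [set t' | Aal al t' /\
            (forall s, small n s -> t' s = t s) /\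
            (forall s, small n s -> t s -> hsame t t' s)].

Definition tau_open (al : Ord) (O : set Tt) : Prop :=
  O `<=` Aal al /\
  forall t', O t' -> exists n t, Aal al t /\ Ubas al n t t' /\ Ubas al n t `<=` O.

(* Generic notions for a topology on a carrier set X of a type T given  *)
(* by its family of open sets op.                                        *)
Definition dense_in {T} (op : set T -> Prop) (D : set T) : Prop :=
  forall O, op O -> O !=set0 -> (O `&` D) !=set0.

Definition Baire_in {T} (op : set T -> Prop) : Prop :=
  forall F : nat -> set T, (forall n, op (F n) /\ dense_in op (F n)) ->
    dense_in op (\bigcap_n F n).

Definition isolated_in {T} (X : set T) (op : set T -> Prop) (x : T) : Prop :=
  X x /\ op [set x].

Definition Tr_open (B : set Tt) : Prop :=
  exists O : set Tt, open O /\ B = Tr `&` O.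

Definition Borel_Tr (B : set Tt) : Prop :=
  <<s Tr, Tr_open >> B.

Definition Borel_tau (al : Ord) (B : set Tt) : Prop :=
  <<s Aal al, tau_open al >> B.

(* Main.v *)
Require Import Defs.
From mathcomp Require Import all_boot all_order.
From mathcomp Require Import all_classical.
From mathcomp Require Import all_reals all_analysis.
From mathcomp Require Import zify.
Local Open Scope classical_set_scope.
Set Implicit Arguments. Unset Strict Implicit. Unset Printing Implicit Defensive.

Fixpoint le' (x y : Ord) {struct x} : Prop :=
  match x with
  | OZ => True
  | OS x' => (fix lt' (y : Ord) : Prop :=
               match y with
               | OZ => False
               | OS y' => le' x' y'
               | OL g => exists k, lt' (g k)
               end) y
  | OL f => forall k, le' (f k) y
  end.

Lemma ltZ x : le' (OS x) OZ = False. Proof. by []. Qed.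
Lemma ltS x y : le' (OS x) (OS y) = le' x y. Proof. by []. Qed.
Lemma ltL x f : le' (OS x) (OL f) = exists k, le' (OS x) (f k). Proof. by []. Qed.
Lemma leL f y : le' (OL f) y = forall k, le' (f k) y. Proof. by []. Qed.

Lemma le'_cocone x f k : le' x (f k) -> le' x (OL f).
Proof.
elim: x => [|x _|h IH] //=.
- by move=> H; exists k.
- by move=> H m; apply: IH.
Qed.

Lemma le'_refl x : le' x x.
Proof.
elim: x => [|x IH|f IH] //=.
by move=> k; apply: le'_cocone (IH k).
Qed.

Lemma le'_trans_all x :
  (forall y z, le' x y -> le' y z -> le' x z) /\
  (forall y z, le' x y -> le' (OS y) z -> le' (OS x) z) /\
  (forall y z, le' (OS x) y -> le' y z -> le' (OS x) z).
Proof.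
elim: x => [|x IH|f IH].
- split; first by [].
  split.
  + move=> y z _; elim: z => [|z IHz|g IHg] //=.
    by move=> [k Hk]; exists k; apply: IHg.
  + move=> y z; elim: y z => [|y IHy|g IHg] z //=.
    * move=> _; elim: z => [|z IHz|h IHh] //=.
      by move=> [k Hk]; exists k; apply: IHh.
    * by move=> [k Hk] H; apply: (IHg k) => //; apply: H.
- have T1 : forall y z, le' (OS x) y -> le' y z -> le' (OS x) z.
    by move=> y z; apply: (proj2 (proj2 IH)).
  have T3 : forall y z, le' (OS x) y -> le' (OS y) z -> le' (OS (OS x)) z.
    move=> y z Hxy; elim: z => [|z IHz|g IHg] //=.
    + by move=> Hyz; apply: T1 Hxy Hyz.
    + by move=> [k Hk]; exists k; apply: IHg.
  split; first exact: T1.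
  split; first exact: T3.
  move=> y z; elim: y z => [|y IHy|g IHg] z //=.
  + by move=> Hxy Hyz; apply: T3 Hxy Hyz.
  + by move=> [k Hk] H; apply: (IHg k) => //; apply: H.
- have T1 : forall y z, le' (OL f) y -> le' y z -> le' (OL f) z.
    by move=> y z /= H1 H2 k; apply: (proj1 (IH k)) (H1 k) H2.
  have T3 : forall y z, le' (OL f) y -> le' (OS y) z -> le' (OS (OL f)) z.
    move=> y z Hxy; elim: z => [|z IHz|g IHg] //=.
    + by move=> Hyz; apply: T1 Hxy Hyz.
    + by move=> [k Hk]; exists k; apply: IHg.
  split; first exact: T1.
  split; first exact: T3.
  move=> y z; elim: y z => [|y IHy|g IHg] z //=.
  + by move=> Hxy Hyz; apply: T3 Hxy Hyz.
  + by move=> [k Hk] H; apply: (IHg k) => //; apply: H.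
Qed.

Lemma le'_trans x y z : le' x y -> le' y z -> le' x z.
Proof. exact: (proj1 (le'_trans_all x)). Qed.

Lemma ole_le' x y : ole x y -> le' x y.
Proof.
elim=> {x y}.
- by [].
- by move=> x y z _ H1 _ H2; apply: le'_trans H1 H2.
- by move=> x y _ H.
- by move=> x f k _ H; apply: le'_cocone H.
- by move=> f x _ H.
Qed.


Lemma le'_ole x y : le' x y -> ole x y.
Proof.
elim: x y => [|x IH|f IH] y.
- by move=> _; apply: ole_zero.
- elim: y => [|y IHy|g IHg].
  + by [].
  + by move=> H; apply: ole_succ_mono; apply: IH.
  + by move=> [k Hk]; apply: (@ole_cocone _ _ k); apply: IHg.
- by move=> H; apply: ole_limiting => k; apply: IH.
Qed.

Lemma ole_refl x : ole x x.
Proof. apply: le'_ole; exact: le'_refl. Qed.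

Lemma ole_SZ x : ~ ole (OS x) OZ.
Proof. by move/ole_le'. Qed.

Lemma ole_SS x y : ole (OS x) (OS y) -> ole x y.
Proof. move/ole_le' => H; apply: le'_ole; exact: H. Qed.

Lemma ole_SL x f : ole (OS x) (OL f) -> exists k, ole (OS x) (f k).
Proof. move/ole_le' => [k Hk]; exists k; exact: le'_ole. Qed.

Lemma olt_wf : well_founded olt.
Proof.
have H : forall y x, le' (OS x) y -> Acc olt x.
  elim=> [|y IH|g IH] x.
  - by [].
  - move=> Hxy; constructor=> z /ole_le' Hz; apply: IH.
    exact: le'_trans Hz Hxy.
  - by move=> [k Hk]; apply: (IH k).
by move=> x; apply: (H (OS x)); apply: le'_refl.
Qed.

Lemma oeq_refl x : oeq x x.
Proof. split; exact: ole_refl. Qed.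
Lemma oeq_sym x y : oeq x y -> oeq y x.
Proof. by case. Qed.
Lemma oeq_trans x y z : oeq x y -> oeq y z -> oeq x z.
Proof. move=> [a b] [c d]; split; [exact: ole_trans a c|exact: ole_trans d b]. Qed.

Lemma hrank_det (t : Tt) s a : hrank t s a -> forall b, hrank t s b -> a = b.
Proof.
elim=> {s a} s g Hs Hg IH b Hb.
inversion Hb; subst.
congr OL; apply: funext => n.
case E: (t (rcons s n)) => //.
by congr OS; apply: IH => //; apply: H0.
Qed.

Lemma hrank_in (t : Tt) s a : hrank t s a -> t s.
Proof. by case. Qed.

Lemma hrank_child (t : Tt) s a n : hrank t s a -> t (rcons s n) ->
  exists b, hrank t (rcons s n) b.
Proof. by case=> {s a} s g _ Hg Hn; exists (g n); apply: Hg. Qed.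

Lemma hrank_cat (t : Tt) s a : Tr t -> hrank t s a ->
  forall r, t (s ++ r) -> exists b, hrank t (s ++ r) b.
Proof.
move=> Htr Ha; elim/last_ind => [|r n IH].
  by rewrite cats0 => _; exists a.
move=> Hn.
have Hr : t (s ++ r).
  apply: Htr Hn; rewrite -rcons_cat; exact: prefix_rcons.
have [b Hb] := IH Hr.
by rewrite -rcons_cat in Hn *; apply: hrank_child Hb Hn.
Qed.

Lemma Aal_rank al (t : Tt) s : Aal al t -> t s -> exists b, hrank t s b.
Proof.
move=> [[Htr _] [a [Ha _]]] Hs.
by have := @hrank_cat t [::] a Htr Ha s; rewrite cat0s; apply.
Qed.

Definition rk (t : Tt) (s : seq nat) : Ord :=
  match pselect (exists b, hrank t s b) with
  | left H => projT1 (cid H)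
  | right _ => OZ
  end.

Lemma rkP (t : Tt) s : (exists b, hrank t s b) -> hrank t s (rk t s).
Proof.
rewrite /rk; case: pselect => // H _; exact: (projT2 (cid H)).
Qed.

Lemma rkE (t : Tt) s a : hrank t s a -> rk t s = a.
Proof. move=> Ha; have H := rkP (ex_intro _ a Ha); exact: hrank_det H a Ha. Qed.

Lemma rk_unfold (t : Tt) s : (exists b, hrank t s b) ->
  rk t s = OL (fun n => if t (rcons s n) then OS (rk t (rcons s n)) else OZ).
Proof.
move=> [a Ha]; rewrite (rkE Ha).
case: Ha => {s a} s g Hs Hg.
congr OL; apply: funext => n; case E: (t (rcons s n)) => //.
by rewrite (rkE (Hg n E)).
Qed.

Lemma hsame_trans (t1 t2 t3 : Tt) s : hsame t1 t2 s -> hsame t2 t3 s -> hsame t1 t3 s.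
Proof.
move=> [a [b [Ha [Hb Hab]]]] [b' [c [Hb' [Hc Hbc]]]].
exists a, c; split => //; split => //.
by rewrite (hrank_det Hb Hb') in Hab; apply: oeq_trans Hab Hbc.
Qed.

Lemma hsame_refl (t : Tt) s a : hrank t s a -> hsame t t s.
Proof. by move=> Ha; exists a, a; split => //; split => //; apply: oeq_refl. Qed.

Lemma hsame_rk (t t' : Tt) s : hsame t t' s -> oeq (rk t s) (rk t' s).
Proof. by move=> [a [b [Ha [Hb Hab]]]]; rewrite (rkE Ha) (rkE Hb). Qed.

Lemma no_branch (t : Tt) s a : hrank t s a ->
  forall f, ~ (forall n, t (s ++ mkseq f n)).
Proof.
elim=> {s a} s g Hs Hg IH f Hf.
apply: (IH (f 0) _ (fun n => f n.+1)) => [|n].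
  by have := Hf 1; rewrite /= cats1.
have E : mkseq f n.+1 = f 0 :: mkseq (fun k => f k.+1) n.
  by rewrite /mkseq /= -add1n iotaDl -map_comp.
by have := Hf n.+1; rewrite E -cat_rcons.
Qed.

Definition small_mono n m s : n <= m -> small n s -> small m s.
Proof.
move=> nm /andP[Hs Ha]; apply/andP; split; first exact: leq_trans Hs nm.
by apply/allP => x /(allP Ha) xn; apply: leq_trans xn nm.
Qed.

Definition bnd (s : seq nat) : nat := size s + sumn s + 1.

Lemma small_bnd s : small (bnd s) s.
Proof.
apply/andP; split; first by rewrite /bnd -addnA leq_addr.
apply/allP => x xs; rewrite /bnd addn1 ltnS.
apply: leq_trans (leq_addl _ _).
elim: s xs => //= y s IH; rewrite in_cons => /orP[/eqP->|/IH]; first exact: leq_addr.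
by move=> H; apply: leq_trans H (leq_addl _ _).
Qed.

Lemma Ubas_self al n (t : Tt) : Aal al t -> Ubas al n t t.
Proof.
move=> Ht; split => //; split => // s _ Hs.
have [b Hb] := Aal_rank Ht Hs; exact: hsame_refl Hb.
Qed.

Lemma Ubas_trans al n m (t t' : Tt) : n <= m -> Ubas al n t t' ->
  Ubas al m t' `<=` Ubas al n t.
Proof.
move=> nm [Ht' [E1 E2]] t'' [Ht'' [F1 F2]].
split => //; split.
  by move=> s Hs; rewrite F1 ?E1 //; apply: small_mono Hs.
move=> s Hs Hts; apply: hsame_trans (E2 s Hs Hts) (F2 s _ _).
  exact: small_mono Hs.
by rewrite E1.
Qed.

Lemma Ubas_open al n (t : Tt) : Aal al t -> tau_open al (Ubas al n t).
Proof.
move=> Ht; split; first by move=> t' [].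
move=> t' Ht'; exists n, t'; split; first by case: Ht'.
split; first by apply: Ubas_self; case: Ht'.
exact: Ubas_trans (leqnn n) Ht'.
Qed.

Lemma open_Ubas al O (t : Tt) : tau_open al O -> O t ->
  exists n, forall m, n <= m -> Ubas al m t `<=` O.
Proof.
move=> [_ HO] Ot; have [n [u [Hu [Htu Hsub]]]] := HO t Ot.
exists n => m nm; apply: subset_trans Hsub; exact: Ubas_trans nm Htu.
Qed.

Lemma inj_unbounded (g : nat -> nat) : injective g -> forall K, exists m, K <= g m.
Proof.
move=> ig K; apply: contrapT => /forallNP H.
have H' : forall m, g m < K by move=> m; rewrite ltnNge; apply/negP; exact: H.
have U : uniq (map g (iota 0 K.+1)) by rewrite map_inj_uniq ?iota_uniq.
have S : {subset map g (iota 0 K.+1) <= iota 0 K}.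
  by move=> x /mapP[m _ ->]; rewrite mem_iota add0n H'.
by have := uniq_leq_size U S; rewrite size_map !size_iota ltnn.
Qed.

Definition code := (seq nat * nat * nat * nat)%type.

Lemma code_often (s : seq nat) (i k0 : nat) K :
  exists k, K <= k /\ exists m, unpickle k = Some ((s, i, k0, m) : code).
Proof.
have ig : injective (fun m => pickle ((s, i, k0, m) : code)).
  by move=> m m' /(pcan_inj pickleK) [].
have [m Hm] := inj_unbounded ig K.
by exists (pickle ((s, i, k0, m) : code)); split => //; exists m; rewrite pickleK.
Qed.

Lemma small_prefix n s j : small n (rcons s j) -> small n s.
Proof.
case/andP; rewrite size_rcons all_rcons => H /andP[_ H2].
by apply/andP; split => //; apply: ltnW.
Qed.

Lemma small0 n : small n [::].
Proof. by []. Qed.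


Section Construction.
Variables (al : Ord) (F : nat -> set Tt) (t0 : Tt) (n0 : nat).
Hypothesis hF : forall k, tau_open al (F k) /\ dense_in (tau_open al) (F k).
Hypothesis Ht0 : Aal al t0.

Definition Wit k (L : seq (Tt * nat)) (p : Tt * nat) : Prop :=
  match (unpickle k : option code) with
  | Some (s, i, k0, _) =>
      k0 < size L -> small (nth (t0,n0) L k0).2 s -> (nth (t0,n0) L k0).1 s ->
      (nth (t0,n0) L k0).1 (rcons s i) ->
      exists j, p.1 (rcons s j) /\ small p.2 (rcons s j) /\
        ole (rk (nth (t0,n0) L k0).1 (rcons s i)) (rk p.1 (rcons s j))
  | None => True
  end.

Definition Pst k L (p : Tt * nat) := let q := last (t0,n0) L in
  Ubas al q.2 q.1 p.1 /\ Ubas al p.2 p.1 `<=` F k /\ q.2 < p.2 /\ Wit k L p.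

Definition step k L : Tt * nat :=
  match pselect (exists p, Pst k L p) with
  | left H => projT1 (cid H)
  | right _ => (t0,n0)
  end.

Fixpoint build k : seq (Tt * nat) :=
  if k is k'.+1 then rcons (build k') (step k' (build k')) else [:: (t0,n0)].

Definition st k := last (t0,n0) (build k).

Lemma buildE k : build k = map st (iota 0 k.+1).
Proof.
elim: k => [|k IH] //.
rewrite -[k.+2]addn1 iotaD map_cat -IH /= cats1 add0n.
by rewrite /st /= last_rcons.
Qed.

Lemma size_build k : size (build k) = k.+1.
Proof. by rewrite buildE size_map size_iota. Qed.

Lemma nth_build k j : j <= k -> nth (t0,n0) (build k) j = st j.
Proof. by move=> jk; rewrite buildE (nth_map 0) ?size_iota // nth_iota. Qed.

Lemma st_S k : st k.+1 = step k (build k).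
Proof. by rewrite /st /= last_rcons. Qed.

Definition Inv k := Aal al (st k).1 /\ forall j, j <= k ->
  Ubas al (st k).2 (st k).1 `<=` Ubas al (st j).2 (st j).1 /\ (st j).2 + (k - j) <= (st k).2.

Lemma exists_step k : Inv k -> exists p, Pst k (build k) p.
Proof.
move=> [Ak Ch]; rewrite /Pst -/(st k).
set t := (st k).1; set n := (st k).2.
have [t' [Ut' Ft']] : exists t', Ubas al n t t' /\ F k t'.
  have [_ D] := hF k.
  have [t' [H1 H2]] := D _ (Ubas_open n Ak) (ex_intro _ t (Ubas_self n Ak)).
  by exists t'.
have At' : Aal al t' by case: Ut'.
have [m0 Hm0] := open_Ubas (proj1 (hF k)) Ft'.
have [b Hb] : exists b, forall m, b <= m -> Wit k (build k) (t', m).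
  rewrite /Wit; case: (unpickle k : option code) => [[[[s i] k0] mm]|]; last by exists 0.
  set q := nth (t0, n0) (build k) k0.
  case: (pselect (k0 < size (build k) /\ small q.2 s /\ q.1 s /\ q.1 (rcons s i)))
     => [[h1 [h2 [h3 h4]]]|hn]; last first.
    by exists 0 => m _ h1 h2 h3 h4; exfalso; apply: hn.
  have k0k : k0 <= k by rewrite size_build ltnS in h1.
  have Eq : q = st k0 by rewrite /q nth_build.
  have Hq := proj1 (Ch k0 k0k) t' Ut'.
  have hs : hsame q.1 t' s by rewrite Eq; case: Hq => _ [_ H]; apply: H; rewrite -Eq.
  have Hoeq := hsame_rk hs.
  have [a [b [Ha [Hb _]]]] := hs.
  have Hlt : ole (OS (rk q.1 (rcons s i))) (rk t' s).
    apply: ole_trans (proj1 Hoeq).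
    rewrite (rk_unfold (ex_intro _ a Ha)).
    apply: (@ole_cocone _ _ i); rewrite h4; exact: ole_refl.
  move: Hlt; rewrite (rk_unfold (ex_intro _ b Hb)) => /ole_SL [j].
  case E': (t' (rcons s j)); last by move/ole_SZ.
  move/ole_SS => Hj.
  exists (bnd (rcons s j)) => m hm _ _ _ _; exists j; split => //; split => //.
  exact: small_mono hm (small_bnd _).
exists (t', maxn (maxn m0 n.+1) b); split => //; split.
  by apply: Hm0; rewrite /= leq_max leq_max leqnn.
split; first by rewrite /= leq_max leq_max ltnSn orbT.
by apply: Hb; rewrite leq_max leqnn orbT.
Qed.

Lemma inv_all k : Inv k /\ Pst k (build k) (st k.+1).
Proof.
have PS : forall k, Inv k -> Pst k (build k) (st k.+1).
  move=> {}k Ik; rewrite st_S /step; case: pselect => [H|H].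
    exact: (projT2 (cid H)).
  by exfalso; apply: H; apply: exists_step.
elim: k => [|k [Ik Pk]].
  have I0 : Inv 0.
    split; first exact: Ht0.
    by move=> j; rewrite leqn0 => /eqP->; split => //; rewrite addn0.
  by split => //; apply: PS.
have Ik1 : Inv k.+1.
  case: Pk; rewrite -/(st k) => U1 [_ [lt1 _]].
  split; first by case: U1.
  move=> j; rewrite leq_eqVlt => /orP[/eqP->|]; first by rewrite subnn addn0; split.
  rewrite ltnS => jk; have [C1 C2] := (proj2 Ik) j jk; split.
    apply: subset_trans C1; exact: Ubas_trans (ltnW lt1) U1.
  by rewrite subSn //; lia.
by split => //; apply: PS.
Qed.

Lemma st_Aal k : Aal al (st k).1.
Proof. exact: (proj1 (proj1 (inv_all k))). Qed.

Lemma st_chain j k : j <= k ->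
  Ubas al (st k).2 (st k).1 `<=` Ubas al (st j).2 (st j).1 /\ (st j).2 + (k - j) <= (st k).2.
Proof. exact: (proj2 (proj1 (inv_all k))). Qed.

Lemma st_ge k : k <= (st k).2.
Proof. have := proj2 (st_chain (leq0n k)); rewrite subn0; lia. Qed.

Lemma st_in j k : j <= k -> Ubas al (st j).2 (st j).1 (st k).1.
Proof. move=> jk; apply: (proj1 (st_chain jk)); exact: Ubas_self (st_Aal k). Qed.

Lemma st_small j k s : j <= k -> small (st j).2 s -> small (st k).2 s.
Proof. move=> jk; apply: small_mono; have := proj2 (st_chain jk); lia. Qed.

Lemma st_agree j k s : j <= k -> small (st j).2 s -> (st k).1 s = (st j).1 s.
Proof. by move=> jk Hs; case: (st_in jk) => _ [E _]; apply: E. Qed.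

Lemma st_hsame j k s : j <= k -> small (st j).2 s -> (st j).1 s -> hsame (st j).1 (st k).1 s.
Proof. by move=> jk Hs Hj; case: (st_in jk) => _ [_ E]; apply: E. Qed.

Lemma st_F k : Ubas al (st k.+1).2 (st k.+1).1 `<=` F k.
Proof. by case: (proj2 (inv_all k)) => _ []. Qed.

Lemma st_wit k : Wit k (build k) (st k.+1).
Proof. by case: (proj2 (inv_all k)) => _ [_ []]. Qed.

Definition T : Tt := fun s => (st (bnd s)).1 s.

Lemma small_st s : small (st (bnd s)).2 s.
Proof. apply: small_mono (small_bnd s); exact: st_ge. Qed.

Lemma T_agree k s : small (st k).2 s -> T s = (st k).1 s.
Proof.
move=> Hs; rewrite /T; case: (leqP k (bnd s)) => kb.
  exact: st_agree kb Hs.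
by rewrite (st_agree (ltnW kb) (small_st s)).
Qed.

Lemma T_tree : Tr T.
Proof.
move=> s s' Hp Ts.
set k := maxn (bnd s) (bnd s').
have Hs : small (st k).2 s by apply: st_small (small_st s); rewrite leq_maxl.
have Hs' : small (st k).2 s' by apply: st_small (small_st s'); rewrite leq_maxr.
rewrite (T_agree Hs') ; rewrite (T_agree Hs) in Ts.
by case: (st_Aal k) => [[Htr _] _]; apply: Htr Hp Ts.
Qed.

Definition H s := rk (st (bnd s)).1 s.

Lemma T_hsame k s : small (st k).2 s -> T s -> oeq (rk (st k).1 s) (H s).
Proof.
move=> Hs Ts; rewrite /H; case: (leqP k (bnd s)) => kb.
  have Tk : (st k).1 s by rewrite -(T_agree Hs).
  by apply: hsame_rk; apply: st_hsame kb Hs Tk.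
apply: oeq_sym; apply: hsame_rk; exact: st_hsame (ltnW kb) (small_st s) Ts.
Qed.

Lemma child_lt s j : T (rcons s j) -> olt (H (rcons s j)) (H s).
Proof.
move=> Tc; set c := rcons s j; set k := bnd c.
have Hc : small (st k).2 c := small_st c.
have Hs : small (st k).2 s := small_prefix Hc.
have Ts : T s by apply: T_tree Tc; exact: prefix_rcons.
have Tkc : (st k).1 c by rewrite -(T_agree Hc).
have Tks : (st k).1 s by rewrite -(T_agree Hs).
have [a Ha] := Aal_rank (st_Aal k) Tks.
rewrite /olt; apply: ole_trans (ole_succ_mono (proj2 (T_hsame Hc Tc))) _.
apply: ole_trans _ (proj1 (T_hsame Hs Ts)).
rewrite (rk_unfold (ex_intro _ a Ha)); apply: (@ole_cocone _ _ j).
rewrite -/c Tkc; exact: ole_refl.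
Qed.


Lemma star s : T s -> exists b, hrank T s b /\ oeq b (H s).
Proof.
suff: forall x, Acc olt x -> forall s, H s = x -> T s ->
    exists b, hrank T s b /\ oeq b (H s).
  by move=> /(_ (H s) (olt_wf _) s erefl).
move=> x; elim=> {}x _ IH {}s Hx Ts.
have IHc : forall j, T (rcons s j) ->
    exists b, hrank T (rcons s j) b /\ oeq b (H (rcons s j)).
  move=> j Tj; apply: (IH (H (rcons s j))) => //; rewrite -Hx; exact: child_lt.
have Hg : forall j, T (rcons s j) -> hrank T (rcons s j) (rk T (rcons s j)).
  by move=> j Tj; apply: rkP; have [b [Hb _]] := IHc j Tj; exists b.
have Eg : forall j, T (rcons s j) -> oeq (rk T (rcons s j)) (H (rcons s j)).
  by move=> j Tj; have [b [Hb Hbo]] := IHc j Tj; rewrite (rkE Hb).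
eexists; split; first exact: (@hrank_intro T s (fun j => rk T (rcons s j)) Ts Hg).
split.
  apply: ole_limiting => j; case Tj: (T (rcons s j)); last exact: ole_zero.
  exact: ole_trans (ole_succ_mono (proj1 (Eg j Tj))) (child_lt Tj).
set k0 := bnd s.
have Tk0 : (st k0).1 s by [].
have [a Ha] := Aal_rank (st_Aal k0) Tk0.
rewrite /H -/k0 (rk_unfold (ex_intro _ a Ha)).
apply: ole_limiting => i; case Ei: ((st k0).1 (rcons s i)); last exact: ole_zero.
have [k [Kk [m Ek]]] := code_often s i k0 k0.
have W := st_wit k; rewrite /Wit Ek size_build nth_build // in W.
have [j [Tj' [Sj Hj]]] := W (leq_ltn_trans Kk (ltnSn k)) (small_st s) Tk0 Ei.
have Tc : T (rcons s j) by rewrite (T_agree Sj).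
apply: ole_trans (ole_succ_mono Hj) _.
apply: (@ole_cocone _ _ j); rewrite Tc; apply: ole_succ_mono.
exact: ole_trans (proj1 (T_hsame Sj Tc)) (proj2 (Eg j Tc)).
Qed.

Lemma T_in k : Ubas al (st k).2 (st k).1 T.
Proof.
have T0 : T [::].
  have [[_ _] [a [Ha _]]] := st_Aal (bnd [::]); exact: hrank_in Ha.
split.
  split.
    split; first exact: T_tree.
    move=> [f Hf]; have [b [Hb _]] := star T0.
    by apply: (no_branch Hb (f:=f)) => n; rewrite cat0s; apply: Hf.
  have [b [Hb Hbo]] := star T0.
  exists b; split => //; apply: oeq_trans Hbo _.
  have [[_ _] [a [Ha Hao]]] := st_Aal (bnd [::]).
  by rewrite /H (rkE Ha).
split; first by move=> s Hs; exact: T_agree Hs.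
move=> s Hs Hks.
have Ts : T s by rewrite (T_agree Hs).
have [b [Hb Hbo]] := star Ts.
have [a Ha] := Aal_rank (st_Aal k) Hks.
exists (rk (st k).1 s), b; split; first by apply: rkP; exists a.
split => //; exact: oeq_trans (T_hsame Hs Ts) (oeq_sym Hbo).
Qed.

End Construction.

Lemma baire al : Baire_in (tau_open al).
Proof.
move=> F hF O HO [t0 Ot0].
have [n0 Hn0] := open_Ubas HO Ot0.
have At0 : Aal al t0 by case: HO => sub _; apply: sub.
exists (T al F t0 n0); split.
  by apply: (Hn0 n0 (leqnn _)); have := @T_in al F t0 n0 hF At0 0; apply.
move=> k _; apply: (@st_F al F t0 n0 hF At0 k); exact: T_in.
Qed.

Lemma sub_transfer (t t' : Tt) s a : hrank t s a ->
  forall s', (forall r, t' (s' ++ r) = t (s ++ r)) -> hrank t' s' a.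
Proof.
elim=> {s a} s g Hs Hg IH s' E.
have E' : forall n, t' (rcons s' n) = t (rcons s n) by move=> n; rewrite -!cats1 E.
have -> : (fun n => if t (rcons s n) then OS (g n) else OZ) =
          (fun n => if t' (rcons s' n) then OS (g n) else OZ).
  by apply: funext => n; rewrite E'.
apply: hrank_intro; first by have := E [::]; rewrite !cats0 => ->.
move=> n Hn; apply: IH; first by rewrite -E'.
by move=> r; rewrite -!cats1 -!catA E.
Qed.

Definition md (P : pred nat) (sg : nat -> nat) (t : Tt) : Tt :=
  fun s => match s with [::] => t [::] | j :: r => P j && t (sg j :: r) end.

Lemma md_U al n (t : Tt) (P : pred nat) (sg : nat -> nat) : Aal al t ->
  (forall j, t [:: j] -> exists j', P j' /\ t [:: sg j'] /\ ole (rk t [:: j]) (rk t [:: sg j'])) ->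
  (forall j, j < n -> P j /\ sg j = j) ->
  Ubas al n t (md P sg t).
Proof.
move=> At back Pn; set t' := md P sg t.
have [[Htr _] [a0 [Ha0 Ha0al]]] := At.
have T0 : t [::] := hrank_in Ha0.
have Htr' : Tr t'.
  move=> s s' Hp; case: s' Hp => [|j' r'] //.
  case: s => [|j r] //= /andP[/eqP <- Hp] /andP[Pj Ht]; rewrite Pj /=.
  by apply: Htr Ht; rewrite /= eqxx.
have ch : forall j, t' [:: j] -> hrank t' [:: j] (rk t [:: sg j]).
  move=> j /andP[Pj Hj]; have [b Hb] := Aal_rank At Hj.
  apply: (sub_transfer (rkP (ex_intro _ b Hb))) => r /=; by rewrite Pj.
have Hr := @hrank_intro t' [::] (fun j => rk t [:: sg j]) T0 ch.
have Hoeq : oeq (OL (fun j => if t' [:: j] then OS (rk t [:: sg j]) else OZ)) (rk t [::]).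
  rewrite (rk_unfold (ex_intro _ a0 Ha0)); split.
    apply: ole_limiting => j; case Tj: (t' [:: j]); last exact: ole_zero.
    apply: (@ole_cocone _ _ (sg j)); case/andP: Tj => _ ->; exact: ole_refl.
  apply: ole_limiting => j; case Tj: (t [:: j]); last exact: ole_zero.
  have [j' [Pj' [Tj' Hle]]] := back j Tj.
  apply: (@ole_cocone _ _ j'); rewrite /= Pj' Tj' /=; exact: ole_succ_mono.
split.
  split; first split => //.
    by move=> [f Hf]; apply: (no_branch Hr (f:=f)) => m; rewrite cat0s; apply: Hf.
  exists (OL (fun j => if t' [:: j] then OS (rk t [:: sg j]) else OZ)); split => //.
  by apply: oeq_trans Hoeq _; rewrite (rkE Ha0).
split.
  move=> [|j r] // /andP[_] /= /andP[jn _].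
  by have [-> ->] := Pn j jn.
move=> [|j r] Hs Ht.
  exists (rk t [::]), (OL (fun j => if t' [:: j] then OS (rk t [:: sg j]) else OZ)).
  split; first exact: rkP (ex_intro _ a0 Ha0).
  by split => //; apply: oeq_sym.
have [b Hb] := Aal_rank At Ht.
exists b, b; split => //; split; last exact: oeq_refl.
apply: (sub_transfer Hb) => r'.
by case/andP: Hs => _ /= /andP[jn _]; have [-> ->] := Pn j jn.
Qed.

Lemma no_isolated al : olt OZ al -> forall t, ~ isolated_in (Aal al) (tau_open al) t.
Proof.
move=> al0 t [At Ot].
have [n Hn] := open_Ubas Ot (erefl t).
have HU := Hn n (leqnn n).
have [[Htr _] [a0 [Ha0 Ha0al]]] := At.
have [j0 Tj0] : exists j0, t [:: j0].
  have : ole (OS OZ) (rk t [::]).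
    by rewrite (rkE Ha0); apply: ole_trans al0 (proj2 Ha0al).
  rewrite (rk_unfold (ex_intro _ a0 Ha0)) => /ole_SL [j].
  case Tj: (t (rcons [::] j)); first by exists j.
  by move=> H; exfalso; apply: (ole_SZ H).
have diff : forall t' : Tt, Ubas al n t t' -> forall s, t' s <> t s -> False.
  by move=> t' /HU -> s.
case: (pselect (exists m, n <= m /\ ~ t [:: m])) => [[m [nm Tm]]|HB].
  pose sg j := if j == m then j0 else j.
  apply: (diff (md predT sg t) _ [:: m]); last by rewrite /= /sg eqxx Tj0 => E; apply: Tm; rewrite -E.
  apply: md_U => // j.
    move=> Tj; exists j; split => //.
    have jm : j != m by apply/eqP => E; apply: Tm; rewrite -E.
    by rewrite /sg (negbTE jm); split => //; apply: ole_refl.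
  move=> jn; split => //; rewrite /sg.
  by have -> : (j == m) = false by apply/eqP => E; rewrite E in jn; rewrite ltnNge nm in jn.
have Hall : forall m, n <= m -> t [:: m].
  by move=> m nm; apply: contrapT => H; apply: HB; exists m.
case: (pselect (exists r, t (n :: r) <> t (n.+1 :: r))) => [[r Hr]|HB2].
  pose sg j := if j == n then n.+1 else if j == n.+1 then n else j.
  have sgK : forall j, sg (sg j) = j.
    have F1 : (n.+1 == n) = false by rewrite (gtn_eqF (ltnSn n)).
    move=> j; rewrite /sg; case: (eqVneq j n) => [->|jn].
      by rewrite !(eqxx, F1).
    case: (eqVneq j n.+1) => [->|jn1].
      by rewrite !(eqxx, F1).
    by rewrite !(negbTE jn, negbTE jn1).
  apply: (diff (md predT sg t) _ (n :: r)); last by rewrite /= /sg eqxx => E; apply: Hr.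
  apply: md_U => // j.
    by move=> Tj; exists (sg j); rewrite sgK; split => //; split => //; apply: ole_refl.
  move=> jn; split => //; rewrite /sg.
  rewrite (ltn_eqF jn) (ltn_eqF (ltn_trans jn (ltnSn n))) //.
have E : forall r, t (n.+1 :: r) = t (n :: r).
  by move=> r; apply: contrapT => H; apply: HB2; exists r => H'; apply: H; rewrite H'.
apply: (diff (md (fun j => j != n) id t) _ [:: n]); last first.
  by rewrite /= eqxx /= Hall.
apply: md_U => // j.
  move=> Tj; case: (eqVneq j n) => [Ejn|jn].
    rewrite {}Ejn in Tj *.
    exists n.+1; split; first by rewrite (gtn_eqF (ltnSn n)).
    split; first exact: Hall.
    have [b Hb] := Aal_rank At Tj.
    have Hb' : hrank t [:: n.+1] (rk t [:: n]).
      apply: (sub_transfer (rkP (ex_intro _ b Hb))) => r /=; exact: E.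
    by rewrite (rkE Hb'); apply: ole_refl.
  by exists j; split => //; split => //; apply: ole_refl.
by move=> jn; split => //; rewrite (ltn_eqF jn).
Qed.

Lemma open_cyl (O : set Tt) (x : Tt) : open O -> O x ->
  exists n, forall y : Tt, (forall s, small n s -> y s = x s) -> O y.
Proof.
move=> oO Ox; apply: contrapT => /forallNP H.
have H' : forall n, exists y : Tt, (forall s, small n s -> y s = x s) /\ ~ O y.
  move=> n; have /existsNP [y Hy] := H n; exists y.
  by have /not_implyP [h1 h2] := Hy.
have [y Hy] := choice H'.
have cv : y @ \oo --> x.
  apply/cvg_sup => i A /= [_ [[B Bop <-] Bfs sBfA]].
  apply: filterS sBfA _.
  exists (bnd i) => // n /= Hn.
  by rewrite (proj1 (Hy n) i (small_mono Hn (small_bnd i))).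
have : (y @ \oo) O by apply: cv; apply: open_nbhs_nbhs; split.
move=> [N _ HN]; apply: (proj2 (Hy N)); exact: (HN N (leqnn N)).
Qed.

Lemma Aal_Tr al : Aal al `<=` Tr.
Proof. by move=> t [[]]. Qed.

Lemma trace_open al (O : set Tt) : open O -> tau_open al (O `&` Aal al).
Proof.
move=> oO; split; first by move=> t [].
move=> t [Ot At]; have [n Hn] := open_cyl oO Ot.
exists n, t; split => //; split; first exact: Ubas_self.
move=> t' [At' [E _]]; split => //; apply: Hn => s Hs; exact: E.
Qed.

Lemma borel_part al (B : set Tt) : B `<=` Aal al -> Borel_Tr B -> Borel_tau al B.
Proof.
move=> BA HB.
pose C := [set B : set Tt | Borel_tau al (B `&` Aal al)].
have sC : sigma_algebra Tr C.
  split.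
  - by rewrite /C /= set0I; exact: sigma_algebra0.
  - move=> A; rewrite /C /= => HA.
    have -> : (Tr `\` A) `&` Aal al = Aal al `\` (A `&` Aal al).
      apply/seteqP; split => x /=.
        by move=> [[_ nA] Ax]; split => // -[].
      move=> [Ax nA]; split => //; split; first exact: Aal_Tr Ax.
      by move=> H; apply: nA.
    exact: sigma_algebraCD.
  - move=> A HA; rewrite /C /= setI_bigcupl; exact: sigma_algebra_bigcup.
have gC : Tr_open `<=` C.
  move=> _ [U [oU ->]]; rewrite /C /=.
  have -> : Tr `&` U `&` Aal al = U `&` Aal al.
    apply/seteqP; split => x /=; first by move=> [[]].
    by move=> [Ux Ax]; split => //; split => //; exact: (Aal_Tr Ax).
  apply: sub_sigma_algebra; exact: trace_open.
have := smallest_sub sC gC HB; rewrite /C /=.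
by have -> : B `&` Aal al = B by apply/seteqP; split => x //=; [case|move=> Bx; split => //; apply: BA].
Qed.

Unset Implicit Arguments.

Theorem lemma5p2 (al : Ord) :
  Baire_in (tau_open al) /\
  (olt OZ al -> forall t, ~ isolated_in (Aal al) (tau_open al) t) /\
  (forall B : set Tt, B `<=` Aal al -> Borel_Tr B -> Borel_tau al B).
Proof.
split; first exact: baire.
split; first exact: no_isolated.
exact: borel_part.
Qed.
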